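(* In the storage model of the context, assume that the graph $\mathcal G$ on $\{1,\dots,n\}$ in which $j,k$ are adjacent iff $j,k\in S_i$ for some $i$ is connected, and that the linear system \[ \sum_{j=1}^{\kappa_i}\alpha_{ij}=\lambda_i\ (i=1,\dots,\mathcal K),\qquad \sum_{i=1}^{\mathcal K}\sum_{j=1}^{\kappa_i}\alpha_{ij}\,\delta_{\ell,s^i_j}=\tfrac1n\ (\ell=1,\dots,n) \] has a positive solution. Let the embedded load chain $X^e(m)$ be constructed using either the JSQ routing policy or the $\varepsilon$-PSERP. Then there exist $c_2>0$ and $a>0$ such that for all $x\in\mathbb N^n$ with $\max_{i}\bigl|x_i-\frac1n\sum_{j=1}^nx_j\bigr|\ge a$, \[ \mathbf E\bigl(f(X^e(m+1))-f(X^e(m))\mid X^e(m)=x\bigr)\le -c_2\sqrt{f(x)}, \] where $f(y)=\sum_{l=1}^n\bigl(y_l-\frac1n\sum_{k=1}^ny_k\bigr)^2$.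
   Context: Storage model: $n$ nodes, non-empty neighborhoods $S_1,\dots,S_{\mathcal K}\subset\{1,\dots,n\}$ covering $\{1,\dots,n\}$, $\kappa_i=|S_i|$, $S_i=\{s^i_1,\dots,s^i_{\kappa_i}\}$ a fixed enumeration. Items arrive at $S_i$ as independent Poisson processes with rates $\lambda_i>0$, $\sum_i\lambda_i=1$; each item is stored at one node of its neighborhood according to the routing policy, independently across arrivals. $X^e(m)\in\mathbb N^n$ is the vector of node loads after the $m$-th arrival. For $x\in\mathbb N^n$, $s^i_{j_{\min}}(x)$ is the first node of $S_i$ at which $x$ is minimal over $S_i$, $s^i_{j_{\max}}(x)$ the last node of $S_i$ at which $x$ is maximal over $S_i$. JSQ: an arriving item at $S_i$ goes to $s^i_{j_{\min}}(x)$. $\varepsilon$-PSERP (given a positive solution $\alpha_{ij}$ and $0<\varepsilon<\min\alpha_{ij}$): an item arriving at $S_i$ goes to $s^i_j$ with probability $(\alpha_{ij}+\varepsilon)/\lambda_i$ if $s^i_j=s^i_{j_{\min}}(x)$, $(\alpha_{ij}-\varepsilon)/\lambda_i$ if $s^i_j=s^i_{j_{\max}}(x)$, $\alpha_{ij}/\lambda_i$ otherwise; if $\kappa_i=1$ it goes to the unique node of $S_i$. $\delta_{\ell,m}$ is the Kronecker delta. *)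

(* Defs.v *)
From HB Require Import structures.
From mathcomp Require Import all_boot all_order all_algebra.
From mathcomp Require Import reals.
Unset Printing Implicit Defensive.
Import Order.TTheory GRing.Theory Num.Theory.
Local Open Scope ring_scope.

Section StorageModel.
Variables (R : realType) (n K : nat) (kappa : 'I_K -> nat).
(* s i j = s^i_j, the j-th node (0-based) of neighborhood S_i *)
Variable s : forall i : 'I_K, 'I_(kappa i) -> 'I_n.

Definition adjG : rel 'I_n :=
  fun j k => [exists i : 'I_K, [exists ab : 'I_(kappa i) * 'I_(kappa i),
               (s i ab.1 == j) && (s i ab.2 == k)]].

Definition G_connected : Prop := forall j k : 'I_n, connect adjG j k.

Definition pos_solution (lam : 'I_K -> R) (alpha : forall i : 'I_K, 'I_(kappa i) -> R) : Prop :=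
  (forall i j, 0 < alpha i j) /\
  (forall i, \sum_(j < kappa i) alpha i j = lam i) /\
  (forall l : 'I_n,
     \sum_(i < K) \sum_(j < kappa i) alpha i j * (s i j == l)%:R = n%:R^-1).

Definition minload (x : 'I_n -> nat) (i : 'I_K) : nat :=
  \big[minn/ \max_(j < kappa i) x (s i j)]_(j < kappa i) x (s i j).
Definition maxload (x : 'I_n -> nat) (i : 'I_K) : nat :=
  \max_(j < kappa i) x (s i j).

Definition is_jmin (x : 'I_n -> nat) (i : 'I_K) (j : 'I_(kappa i)) : bool :=
  (x (s i j) == minload x i) &&
  [forall k : 'I_(kappa i), ((k : nat) < j)%N ==> (x (s i k) != minload x i)].
Definition is_jmax (x : 'I_n -> nat) (i : 'I_K) (j : 'I_(kappa i)) : bool :=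
  (x (s i j) == maxload x i) &&
  [forall k : 'I_(kappa i), ((j : nat) < k)%N ==> (x (s i k) != maxload x i)].

(* routing probabilities: probability that an item arriving at S_i in state x
   is stored at s^i_j *)
Definition jsq_route (i : 'I_K) (x : 'I_n -> nat) (j : 'I_(kappa i)) : R :=
  (is_jmin x i j)%:R.

Definition pserp_route (lam : 'I_K -> R) (alpha : forall i : 'I_K, 'I_(kappa i) -> R)
  (eps : R) (i : 'I_K) (x : 'I_n -> nat) (j : 'I_(kappa i)) : R :=
  if kappa i == 1%N then 1
  else if is_jmin x i j then (alpha i j + eps) / lam i
  else if is_jmax x i j then (alpha i j - eps) / lam i
  else alpha i j / lam i.

Definition add_item (x : 'I_n -> nat) (v : 'I_n) : 'I_n -> nat :=
  fun l => (x l + (l == v))%N.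

Definition mean (y : 'I_n -> nat) : R := (\sum_(k < n) (y k)%:R) / n%:R.

Definition fL (y : 'I_n -> nat) : R := \sum_(l < n) ((y l)%:R - mean y) ^+ 2.

Definition maxdev (x : 'I_n -> nat) : R :=
  \big[Num.max/0]_(l < n) `|(x l)%:R - mean x|.

(* E( f(X^e(m+1)) - f(X^e(m)) | X^e(m) = x ) for the embedded chain:
   the next arrival comes from S_i with probability lam i (sum lam = 1),
   then goes to s^i_j with probability route i x j. *)
Definition drift (lam : 'I_K -> R)
  (route : forall i : 'I_K, ('I_n -> nat) -> 'I_(kappa i) -> R) (x : 'I_n -> nat) : R :=
  \sum_(i < K) lam i * \sum_(j < kappa i) route i x j * (fL (add_item x (s i j)) - fL x).

End StorageModel.

Arguments adjG {n K kappa} s.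
Arguments G_connected {n K kappa} s.
Arguments pos_solution {R n K kappa} s lam alpha.
Arguments jsq_route {R n K kappa} s i x j.
Arguments pserp_route {R n K kappa} s lam alpha eps i x j.
Arguments fL {R n} y.
Arguments mean {R n} y.
Arguments maxdev {R n} x.
Arguments drift {R n K kappa} s lam route x.

(* Main.v *)
Require Import Defs.
From HB Require Import structures.
From mathcomp Require Import all_boot all_order all_algebra.
From mathcomp Require Import reals ring lra.
Import Order.TTheory GRing.Theory Num.Theory.
Local Open Scope ring_scope.

Module B.

Section F.
Variables (R : realType) (n : nat).
Hypothesis npos : (0 < n)%N.
Local Notation add_item := (@add_item n).

Definition dv (x : 'I_n -> nat) (l : 'I_n) : R := (x l)%:R - mean x.

Lemma sum_delta (T : finType) (v : T) (F : T -> R) :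
  \sum_(l : T) ((l == v)%:R * F l) = F v.
Proof.
rewrite (bigD1 v) //= eqxx mul1r big1 ?addr0 // => l /negbTE ->; by rewrite mul0r.
Qed.

Lemma nR_neq0 : (n%:R : R) != 0.
Proof. by rewrite pnatr_eq0 -lt0n. Qed.

Lemma sum_dv x : \sum_l dv x l = 0.
Proof.
rewrite /dv sumrB sumr_const card_ord /mean -[_ *+ n]mulr_natr.
by rewrite mulfVK ?subrr // nR_neq0.
Qed.

Lemma mean_add x v : mean (add_item x v) = mean x + n%:R^-1 :> R.
Proof.
rewrite /mean /Defs.add_item.
under eq_bigr do rewrite natrD.
rewrite big_split /= mulrDl; congr (_ + _).
rewrite (_ : \sum_(i < n) (i == v)%:R = 1) ?mul1r //.
by rewrite (bigD1 v) //= eqxx big1 ?addr0 // => l /negbTE ->.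
Qed.

Lemma fL_add x v :
  fL (add_item x v) - fL x = 2 * dv x v + 1 - n%:R^-1 :> R.
Proof.
rewrite /fL mean_add -sumrB.
set t := (n%:R^-1 : R).
have E : forall l, ((add_item x v l)%:R - (mean x + t)) ^+ 2 - ((x l)%:R - mean x) ^+ 2
   = t ^+ 2 - 2 * t * dv x l + (l == v)%:R * (1 - 2 * t + 2 * dv x l).
  move=> l; rewrite /Defs.add_item /dv natrD; case: (l == v) => /=; ring.
under eq_bigr do rewrite E.
rewrite !big_split /= (@sum_delta _ v) sumr_const card_ord sumrN -mulr_sumr sum_dv.
have nt : (t ^+ 2) *+ n = t.
  by rewrite -mulr_natr /t expr2 -mulrA mulVf ?mulr1 // nR_neq0.
rewrite nt; ring.
Qed.

End F.

End B.
Import B.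

Module C.

Section Aux.
Variables (R : realType) (n K : nat) (kappa : 'I_K -> nat).
Variable s : forall i : 'I_K, 'I_(kappa i) -> 'I_n.
Hypothesis kpos : forall i, (0 < kappa i)%N.
Local Notation minload := (@minload n K kappa).
Local Notation maxload := (@maxload n K kappa).
Local Notation is_jmin := (@is_jmin n K kappa).
Local Notation is_jmax := (@is_jmax n K kappa).

Lemma bigmin_seq_le (T : eqType) (r : seq T) (idx : nat) (F : T -> nat) j :
  j \in r -> (\big[minn/idx]_(k <- r) F k <= F j)%N.
Proof.
elim: r => // a r IH; rewrite inE big_cons => /orP[/eqP -> | /IH H].
- exact: geq_minl.
- exact: leq_trans (geq_minr _ _) H.
Qed.

Lemma minload_le x i j : (minload s x i <= x (s i j))%N.
Proof. rewrite /Defs.minload; apply: bigmin_seq_le; exact: mem_index_enum. Qed.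

Lemma maxload_ge x i j : (x (s i j) <= maxload s x i)%N.
Proof. rewrite /Defs.maxload; exact: (leq_bigmax (F := fun j : ordinal (kappa i) => x (s i j))). Qed.

Lemma minload_ex x i : exists j, x (s i j) = minload s x i.
Proof.
rewrite /Defs.minload.
apply: (big_ind (fun y => exists j, x (s i j) = y)).
- have: (0 < #|'I_(kappa i)|)%N by rewrite card_ord kpos.
  move=> /(bigop.eq_bigmax (fun j : ordinal (kappa i) => x (s i j))) [j ->]; by exists j.
- move=> a b [j1 <-] [j2 <-]; rewrite /minn; case: ifP => _; by eexists.
- by move=> j _; exists j.
Qed.

Lemma maxload_ex x i : exists j, x (s i j) = maxload s x i.
Proof.
rewrite /Defs.maxload.
have: (0 < #|'I_(kappa i)|)%N by rewrite card_ord kpos.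
move=> /(bigop.eq_bigmax (fun j : ordinal (kappa i) => x (s i j))) [j ->]; by exists j.
Qed.

Lemma jmin_ex x i : exists j, is_jmin s x i j.
Proof.
have [j0 Hj0] := minload_ex x i.
have P0 : (fun j : 'I_(kappa i) => x (s i j) == minload s x i) j0 by apply/eqP.
case: (@arg_minnP _ j0 (fun j : 'I_(kappa i) => x (s i j) == minload s x i) (fun j : 'I_(kappa i) => nat_of_ord j) P0) => j Pj Hmin.
exists j; rewrite /Defs.is_jmin Pj /=; apply/forallP => k; apply/implyP => Hk.
apply/negP => Pk; have := Hmin k Pk; rewrite leqNgt Hk //.
Qed.

Lemma jmax_ex x i : exists j, is_jmax s x i j.
Proof.
have [j0 Hj0] := maxload_ex x i.
have P0 : (fun j : 'I_(kappa i) => x (s i j) == maxload s x i) j0 by apply/eqP.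
case: (@arg_maxnP _ j0 (fun j : 'I_(kappa i) => x (s i j) == maxload s x i) (fun j : 'I_(kappa i) => nat_of_ord j) P0) => j Pj Hmax.
exists j; rewrite /Defs.is_jmax Pj /=; apply/forallP => k; apply/implyP => Hk.
apply/negP => Pk; have := Hmax k Pk; rewrite /geq /= leqNgt Hk //.
Qed.

Lemma jmin_uniq {x i j j'} : is_jmin s x i j -> is_jmin s x i j' -> j = j'.
Proof.
move=> /andP[P1 /forallP F1] /andP[P2 /forallP F2]; apply/val_inj/eqP.
case: (ltngtP j j') => // H.
- by have := implyP (F2 j) H; rewrite P1.
- by have := implyP (F1 j') H; rewrite P2.
Qed.

Lemma jmax_uniq {x i j j'} : is_jmax s x i j -> is_jmax s x i j' -> j = j'.
Proof.
move=> /andP[P1 /forallP F1] /andP[P2 /forallP F2]; apply/val_inj/eqP.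
case: (ltngtP j j') => // H.
- by have := implyP (F1 j') H; rewrite P2.
- by have := implyP (F2 j) H; rewrite P1.
Qed.


Lemma sum_delta' (T : finType) (v : T) (F : T -> R) :
  \sum_(l : T) ((l == v)%:R * F l) = F v.
Proof.
rewrite (bigD1 v) //= eqxx mul1r big1 ?addr0 // => l /negbTE ->; by rewrite mul0r.
Qed.

Lemma jsq_sum x i (g : 'I_(kappa i) -> R) j0 : is_jmin s x i j0 ->
  \sum_j jsq_route s i x j * g j = g j0.
Proof.
move=> H0; rewrite (bigD1 j0) //= /jsq_route H0 mul1r big1 ?addr0 // => j Hj.
case Hm: (is_jmin s x i j); last by rewrite mul0r.
by rewrite (jmin_uniq Hm H0) eqxx in Hj.
Qed.

Lemma all_eq_sum {i} (j0 : 'I_(kappa i)) (F : 'I_(kappa i) -> R) :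
  kappa i = 1%N -> \sum_j F j = F j0.
Proof.
move=> k1; rewrite (big_pred1 j0) // => j /=; apply/esym/eqP/ord_inj.
have h1 : (j < 1)%N := leq_trans (ltn_ord j) (eq_leq k1).
have h2 : (j0 < 1)%N := leq_trans (ltn_ord j0) (eq_leq k1).
by move: h1 h2; rewrite !ltnS !leqn0 => /eqP -> /eqP ->.
Qed.

Lemma jmin_neq_jmax {x i j0 j1} : (kappa i != 1)%N ->
  is_jmin s x i j0 -> is_jmax s x i j1 -> j0 != j1.
Proof.
move=> k1 /andP[P0 /forallP F0] /andP[P1 /forallP F1]; apply/eqP => E; subst j1.
have k2 : (1 < kappa i)%N by rewrite ltn_neqAle eq_sym k1 kpos.
have allm : forall k, x (s i k) = minload s x i.
  move=> k; apply/eqP; rewrite eqn_leq minload_le andbT.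
  by rewrite -(eqP P0) (eqP P1) maxload_ge.
have hk : ((kappa i).-1 < kappa i)%N by rewrite ltn_predL kpos.
have z0 : (0 < kappa i)%N := kpos i.
case: (posnP j0) => Hj.
- have := implyP (F1 (Ordinal hk)); rewrite /= Hj -ltnS prednK // k2 -(eqP P1) !allm eqxx.
  by move=> /(_ isT).
- have := implyP (F0 (Ordinal z0)); rewrite /= Hj allm eqxx.
  by move=> /(_ isT).
Qed.

Lemma pserp_sum (lam : 'I_K -> R) alpha eps x i (g : 'I_(kappa i) -> R) j0 j1 :
  0 < lam i -> \sum_j alpha i j = lam i ->
  is_jmin s x i j0 -> is_jmax s x i j1 ->
  lam i * \sum_j pserp_route s lam alpha eps i x j * g j
  = \sum_j alpha i j * g j + eps * (g j0 - g j1).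
Proof.
move=> lp sa H0 H1.
have ln : lam i != 0 by rewrite gt_eqF.
case: (eqVneq (kappa i) 1%N) => k1.
- rewrite -sa (all_eq_sum j0) // (all_eq_sum j0 (fun j => alpha i j * g j)) //.
  rewrite (all_eq_sum j0) //.
  have -> : j1 = j0.
    apply/ord_inj.
    have h1 : (j1 < 1)%N := leq_trans (ltn_ord j1) (eq_leq k1).
    have h2 : (j0 < 1)%N := leq_trans (ltn_ord j0) (eq_leq k1).
    by move: h1 h2; rewrite !ltnS !leqn0 => /eqP -> /eqP ->.
  by rewrite /pserp_route k1 eqxx subrr mulr0 addr0 mul1r.
have E : forall j, lam i * pserp_route s lam alpha eps i x j
   = alpha i j + eps * ((j == j0)%:R - (j == j1)%:R).
  move=> j; rewrite /pserp_route (negbTE k1).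
  have n01 := jmin_neq_jmax k1 H0 H1.
  case: (boolP (is_jmin s x i j)) => Hm.
    rewrite (jmin_uniq Hm H0) eqxx (negbTE n01) /=; field; exact: ln.
  case: (boolP (is_jmax s x i j)) => HM.
    rewrite (jmax_uniq HM H1) eqxx eq_sym (negbTE n01) /=; field; exact: ln.
  have a : (j == j0) = false by case: eqP => // E; move: Hm; rewrite E H0.
  have b : (j == j1) = false by case: eqP => // E; move: HM; rewrite E H1.
  rewrite a b /=; field; exact: ln.
rewrite mulr_sumr.
under eq_bigr do rewrite mulrA E mulrDl.
rewrite big_split /=; congr (_ + _).
under eq_bigr do rewrite -mulrA mulrBl.
rewrite -mulr_sumr; congr (_ * _).
rewrite sumrB; congr (_ - _).
- exact: (@sum_delta' _ j0).
- exact: (@sum_delta' _ j1).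
Qed.

End Aux.

End C.
Import C.

Module D.

Section D.
Variables (R : realType) (n K : nat) (kappa : 'I_K -> nat).
Variable s : forall i : 'I_K, 'I_(kappa i) -> 'I_n.
Hypothesis kpos : forall i, (0 < kappa i)%N.
Hypothesis npos : (0 < n)%N.
Variable lam : 'I_K -> R.
Hypothesis lampos : forall i, 0 < lam i.
Hypothesis lamsum : \sum_i lam i = 1.
Local Notation minload := (@minload n K kappa s).
Local Notation maxload := (@maxload n K kappa s).
Local Notation dv := (@dv R n).

Definition c0 : R := 1 - n%:R^-1.
Definition Rsum (x : 'I_n -> nat) : R := \sum_i ((maxload x i)%:R - (minload x i)%:R).

Lemma drift_eq route x : drift s lam route x =
  \sum_i lam i * \sum_j route i x j * (2 * dv x (s i j) + c0).
Proof.
apply: eq_bigr => i _; congr (_ * _); apply: eq_bigr => j _.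
by rewrite (@fL_add R n npos) /c0 addrA.
Qed.

Lemma alpha_dv_sum alpha x : pos_solution s lam alpha ->
  \sum_i \sum_j alpha i j * dv x (s i j) = 0.
Proof.
move=> [_ [_ Hl]].
transitivity (\sum_i \sum_j \sum_l alpha i j * ((s i j == l)%:R * dv x l)).
  apply: eq_bigr => i _; apply: eq_bigr => j _; rewrite -mulr_sumr; congr (_ * _).
  rewrite -(@sum_delta R _ (s i j) (dv x)); apply: eq_bigr => l _; by rewrite eq_sym.
under eq_bigr do rewrite exchange_big /=.
rewrite exchange_big /=.
transitivity (\sum_l dv x l * n%:R^-1).
  apply: eq_bigr => l _; rewrite -(Hl l) mulr_sumr; apply: eq_bigr => i _.
  rewrite mulr_sumr; apply: eq_bigr => j _; ring.
by rewrite -mulr_suml (@sum_dv R n npos) mul0r.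
Qed.

Lemma alpha_const_sum alpha (c : R) : pos_solution s lam alpha ->
  \sum_i \sum_j alpha i j * c = c.
Proof.
move=> [_ [Hs _]].
under eq_bigr do rewrite -mulr_suml Hs.
by rewrite -mulr_suml lamsum mul1r.
Qed.

Lemma drift_pserp alpha eps x : pos_solution s lam alpha ->
  drift s lam (pserp_route s lam alpha eps) x = c0 - 2 * eps * Rsum x.
Proof.
move=> ps; rewrite drift_eq.
transitivity (\sum_i (\sum_j alpha i j * (2 * dv x (s i j) + c0)
   + eps * (2 * ((minload x i)%:R - (maxload x i)%:R)))).
  apply: eq_bigr => i _.
  have [j0 H0] := @jmin_ex n K kappa s kpos x i.
  have [j1 H1] := @jmax_ex n K kappa s kpos x i.
  rewrite (@pserp_sum R n K kappa s kpos lam alpha eps x i (fun j => 2 * dv x (s i j) + c0) j0 j1 (lampos i) _ H0 H1);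
    last by case: ps => _ [->].
  congr (_ + _ * _).
  case/andP: H0 => /eqP <- _; case/andP: H1 => /eqP <- _; rewrite /dv; ring.
rewrite big_split /=.
under eq_bigr do under eq_bigr do rewrite mulrDr.
under eq_bigr do rewrite big_split /=.
rewrite big_split /= alpha_const_sum //.
under eq_bigr do under eq_bigr do rewrite mulrA [_ * 2]mulrC -mulrA.
under eq_bigr do rewrite -mulr_sumr.
rewrite -mulr_sumr alpha_dv_sum // mulr0 add0r.
rewrite /Rsum mulr_sumr -sumrN; congr (_ + _).
apply: eq_bigr => i _; ring.
Qed.

Lemma T_ge (alpha : forall i : 'I_K, 'I_(kappa i) -> R) (beta : R) x i : (forall i j, 0 < alpha i j) -> (forall i j, beta <= alpha i j) ->
  beta * ((maxload x i)%:R - (minload x i)%:R)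
  <= \sum_j alpha i j * ((x (s i j))%:R - (minload x i)%:R).
Proof.
move=> ap bl.
have [j1 H1] := @maxload_ex n K kappa s kpos x i.
have mnle : forall j, ((minload x i)%:R <= (x (s i j))%:R :> R).
  by move=> j; rewrite ler_nat (@minload_le n K kappa s).
rewrite (bigD1 j1) //= -H1.
apply: (@le_trans _ _ (alpha i j1 * ((x (s i j1))%:R - (minload x i)%:R))).
- apply: ler_wpM2r; [by rewrite subr_ge0 mnle | exact: bl].
- rewrite lerDl; apply: sumr_ge0 => j _; apply: mulr_ge0; [exact: ltW | by rewrite subr_ge0 mnle].
Qed.

Lemma drift_jsq alpha (beta : R) x : pos_solution s lam alpha -> (forall i j, beta <= alpha i j) ->
  drift s lam (jsq_route s) x <= c0 - 2 * beta * Rsum x.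
Proof.
move=> ps bl; rewrite drift_eq.
apply: (@le_trans _ _ (\sum_i (\sum_j alpha i j * (2 * dv x (s i j) + c0)
   - 2 * (beta * ((maxload x i)%:R - (minload x i)%:R))))).
  apply: ler_sum => i _.
  have [j0 H0] := @jmin_ex n K kappa s kpos x i.
  rewrite (@jsq_sum R n K kappa s x i (fun j => 2 * dv x (s i j) + c0) j0 H0).
  have E : lam i * (2 * dv x (s i j0) + c0) = \sum_j alpha i j * (2 * dv x (s i j) + c0)
     - 2 * \sum_j alpha i j * ((x (s i j))%:R - (minload x i)%:R).
    case: ps => _ [Hs _]; rewrite -(Hs i) mulr_suml mulr_sumr -sumrB.
    apply: eq_bigr => j _.
    case/andP: H0 => /eqP H0 _; rewrite /dv H0; ring.
  rewrite E; apply: lerB => //; apply: ler_wpM2l => //; exact: T_ge (proj1 ps) bl.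
rewrite sumrB.
under eq_bigr do under eq_bigr do rewrite mulrDr.
under eq_bigr do rewrite big_split /=.
rewrite big_split /= alpha_const_sum //.
under eq_bigr do under eq_bigr do rewrite mulrA [_ * 2]mulrC -mulrA.
under eq_bigr do rewrite -mulr_sumr.
rewrite -mulr_sumr alpha_dv_sum // mulr0 add0r.
by rewrite /Rsum -!mulr_sumr mulrA.
Qed.

End D.

End D.
Import D.

Module E.

Section E.
Variables (R : realType) (n K : nat) (kappa : 'I_K -> nat).
Variable s : forall i : 'I_K, 'I_(kappa i) -> 'I_n.
Hypothesis kpos : forall i, (0 < kappa i)%N.
Hypothesis npos : (0 < n)%N.
Local Notation minload := (@minload n K kappa s).
Local Notation maxload := (@maxload n K kappa s).
Local Notation dv := (@dv R n).
Local Notation Rsum := (@Rsum R n K kappa s).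

Lemma Rsum_term_ge0 x i : 0 <= ((maxload x i)%:R - (minload x i)%:R : R).
Proof.
have [j _] := @minload_ex n K kappa s kpos x i.
rewrite subr_ge0 ler_nat; apply: leq_trans (@minload_le n K kappa s x i j) _.
exact: maxload_ge.
Qed.

Lemma Rsum_ge0 x : 0 <= Rsum x.
Proof. apply: sumr_ge0 => i _; exact: Rsum_term_ge0. Qed.

Lemma adj_bound x j k : adjG s j k -> `|(x j)%:R - (x k)%:R| <= Rsum x.
Proof.
case/existsP => i /existsP [[a b]] /andP [/eqP Ha /eqP Hb] /=.
apply: (@le_trans _ _ ((maxload x i)%:R - (minload x i)%:R)).
  have h1 := @minload_le n K kappa s x i a; have h2 := @maxload_ge n K kappa s x i a.
  have h3 := @minload_le n K kappa s x i b; have h4 := @maxload_ge n K kappa s x i b.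
  rewrite Ha in h1 h2; rewrite Hb in h3 h4.
  move: h1 h2 h3 h4; rewrite -!(ler_nat R) => h1 h2 h3 h4.
  rewrite ler_norml; apply/andP; split; lra.
rewrite /Rsum /D.Rsum (bigD1 i) //= lerDl; apply: sumr_ge0 => i' _; exact: Rsum_term_ge0.
Qed.

Lemma path_bound x l p : path (adjG s) l p ->
  `|(x l)%:R - (x (last l p))%:R| <= (size p)%:R * Rsum x :> R.
Proof.
elim: p l => [|y p IH] l /=.
  by move=> _; rewrite subrr normr0 mul0r.
case/andP => Hly /IH H.
have -> : ((x l)%:R - (x (last y p))%:R : R) = ((x l)%:R - (x y)%:R) + ((x y)%:R - (x (last y p))%:R) by ring.
apply: le_trans (ler_normD _ _) _.
rewrite -addn1 natrD mulrDl mul1r addrC; apply: lerD => //; exact: adj_bound.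
Qed.

Lemma conn_bound x l k : G_connected s -> `|(x l)%:R - (x k)%:R| <= n%:R * Rsum x :> R.
Proof.
move=> /(_ l k) /connectP [p Hp ->].
case: (shortenP Hp) => p' Hp' Hu _.
apply: le_trans (path_bound x l p' Hp') _.
apply: ler_wpM2r; first exact: Rsum_ge0.
rewrite ler_nat; have := max_card (mem (l :: p')); rewrite card_ord.
by move/card_uniqP: Hu => -> /=; apply: leq_trans.
Qed.

Lemma dv_eq x l : dv x l = (\sum_k ((x l)%:R - (x k)%:R)) / n%:R.
Proof.
rewrite /B.dv /mean sumrB sumr_const card_ord mulrBl -[(x l)%:R *+ n]mulr_natr.
by rewrite mulfK // (@nR_neq0 R n npos).
Qed.

Lemma dv_bound x l : G_connected s -> `|dv x l| <= n%:R * (n%:R * Rsum x).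
Proof.
move=> Gc; set B := n%:R * Rsum x.
have hb : forall k, - B <= (x l)%:R - (x k)%:R <= B.
  by move=> k; rewrite -ler_norml; exact: conn_bound.
have np : (0 : R) < n%:R by rewrite ltr0n.
have sc : forall c : R, \sum_(k < n) c = c * n%:R.
  by move=> c; rewrite sumr_const card_ord mulr_natr.
have B0 : 0 <= B by apply: mulr_ge0; [exact: ler0n | exact: Rsum_ge0].
have n1 : (1 : R) <= n%:R by rewrite ler1n.
have h3 : 0 <= B * n%:R * (n%:R - 1).
  by apply: mulr_ge0; [apply: mulr_ge0 => //; exact: ltW | rewrite subr_ge0].
clearbody B.
rewrite dv_eq ler_norml; apply/andP; split.
- rewrite ler_pdivlMr //.
  apply: (@le_trans _ _ (\sum_(k < n) - B)).
    rewrite sc; nra.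
  by apply: ler_sum => k _; case/andP: (hb k).
- rewrite ler_pdivrMr //.
  apply: (@le_trans _ _ (\sum_(k < n) B)).
    by apply: ler_sum => k _; case/andP: (hb k).
  rewrite sc; nra.
Qed.

End E.

End E.
Import E.

Lemma bigminr_le (R : realType) (T : eqType) (r : seq T) (idx : R) (F : T -> R) j :
  j \in r -> \big[Num.min/idx]_(k <- r) F k <= F j.
Proof.
elim: r => // a r IH; rewrite inE big_cons => /orP[/eqP -> | /IH H]; rewrite ge_min.
- by rewrite lexx.
- by rewrite H orbT.
Qed.

Lemma minpos (R : realType) K (kappa : 'I_K -> nat) (alpha : forall i : 'I_K, 'I_(kappa i) -> R) :
  (forall i j, 0 < alpha i j) -> exists beta : R, 0 < beta /\ forall i j, beta <= alpha i j.
Proof.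
move=> ap.
exists (\big[Num.min/1]_(i < K) \big[Num.min/1]_(j < kappa i) alpha i j); split.
- apply: (big_ind (fun y => 0 < y)) => //.
  + by move=> a b ha hb; rewrite lt_min ha hb.
  + move=> i _; apply: (big_ind (fun y => 0 < y)) => //.
    by move=> a b ha hb; rewrite lt_min ha hb.
- move=> i j.
  apply: le_trans (@bigminr_le R _ _ 1 (fun i => \big[Num.min/1]_(j < kappa i) alpha i j) i (mem_index_enum i)) _.
  exact: (@bigminr_le R _ _ 1 (fun j => alpha i j) j (mem_index_enum j)).
Qed.

Theorem lemma3p4 (R : realType) (n K : nat) (kappa : 'I_K -> nat)
  (s : forall i : 'I_K, 'I_(kappa i) -> 'I_n) (lam : 'I_K -> R)
  (route : forall i : 'I_K, ('I_n -> nat) -> 'I_(kappa i) -> R) :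
  (forall i, (0 < kappa i)%N) ->
  (forall i, injective (s i)) ->
  (forall l : 'I_n, exists i j, s i j = l) ->
  (forall i, 0 < lam i) ->
  \sum_(i < K) lam i = 1 ->
  G_connected s ->
  (exists alpha, pos_solution s lam alpha) ->
  (route = jsq_route s \/
   exists (alpha : forall i : 'I_K, 'I_(kappa i) -> R) (eps : R),
     [/\ pos_solution s lam alpha, 0 < eps, (forall i j, eps < alpha i j)
       & route = pserp_route s lam alpha eps]) ->
  exists c2 a : R, [/\ 0 < c2, 0 < a &
    forall x : 'I_n -> nat, a <= maxdev x ->
      drift s lam route x <= - (c2 * Num.sqrt (fL x))].
Proof.
move=> kpos _ _ lampos lamsum Gc [alpha0 ps0] Hroute.
pose Rs := @Rsum R n K kappa s.
case: (posnP n) => [n0 | npos].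
  exists 1, 1; split => // x.
  have -> : maxdev x = 0 :> R.
    rewrite /maxdev; move: x; rewrite n0 => x; by rewrite big_ord0.
  by rewrite ler10.
have [beta [bpos Hd]] : exists beta : R, 0 < beta /\
    forall x, drift s lam route x <= c0 R n - 2 * beta * Rs x.
  case: Hroute => [-> | [alpha [eps [ps epos _ ->]]]].
  - have [beta [bp bl]] := @minpos R K kappa alpha0 (proj1 ps0).
    exists beta; split => // x.
    exact: (@drift_jsq R n K kappa s kpos npos lam lamsum alpha0 beta x ps0 bl).
  - exists eps; split => // x.
    by rewrite (@drift_pserp R n K kappa s kpos npos lam lampos lamsum alpha eps x ps).
have np : (0 : R) < n%:R by rewrite ltr0n.
set M : R := n%:R * n%:R.
have Mp : 0 < M by rewrite mulr_gt0.
exists (beta / (n%:R * M)), (M / beta); split.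
- by rewrite divr_gt0 // mulr_gt0.
- by rewrite divr_gt0.
move=> x Ha.
have R0 : 0 <= Rs x := @Rsum_ge0 R n K kappa s kpos x.
have dvb : forall l, `|@dv R n x l| <= M * Rs x.
  move=> l; rewrite /M -mulrA; exact: (@dv_bound R n K kappa s kpos npos x l Gc).
have Hmd : maxdev x <= M * Rs x.
  rewrite /maxdev; apply: bigmax_le => [|l _]; first by apply: mulr_ge0 => //; exact: ltW.
  exact: dvb.
have H1 : 1 <= beta * Rs x.
  have := le_trans Ha Hmd; rewrite ler_pdivrMr // => h.
  have : M * 1 <= M * (beta * Rs x) by rewrite mulr1 (mulrC beta) mulrA.
  by rewrite ler_pM2l.
have Hf : fL x <= (n%:R * M * Rs x) ^+ 2.
  apply: (@le_trans _ _ (\sum_(l < n) (M * Rs x) ^+ 2)).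
    apply: ler_sum => l _.
    have := dvb l; rewrite /B.dv ler_norml => /andP[h1 h2].
    have : 0 <= M * Rs x by apply: mulr_ge0 => //; exact: ltW.
    nra.
  rewrite sumr_const card_ord -mulr_natr.
  have n1 : (1 : R) <= n%:R by rewrite ler1n.
  have : 0 <= (M * Rs x) ^+ 2 by apply: sqr_ge0.
  rewrite !expr2; nra.
have Hs : Num.sqrt (fL x) <= n%:R * M * Rs x.
  have C0 : 0 <= n%:R * M * Rs x by apply: mulr_ge0 => //; apply: mulr_ge0; exact: ltW.
  by rewrite -(ger0_norm C0) -sqrtr_sqr; apply: ler_wsqrtr.
have c01 : c0 R n <= 1 by rewrite /c0 lerBlDr lerDl invr_ge0 ltW.
apply: le_trans (Hd x) _.
have : beta / (n%:R * M) * Num.sqrt (fL x) <= beta * Rs x.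
  rewrite mulrAC ler_pdivrMr ?mulr_gt0 //.
  rewrite -mulrA; apply: ler_wpM2l; [exact: ltW|].
  by rewrite [Rs x * _]mulrC.
lra.
Qed.
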